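(* For every $n\in\mathbb{N}$, the Fibonacci-sum set-graph $G^F_{A^{(n)}}$ has no pendant vertices (i.e. no vertex of degree exactly $1$).
   Context: Let $\mathcal{F}=\{f_m\}_{m\ge 0}$ be the Fibonacci numbers, $f_0=0$, $f_1=1$, $f_m=f_{m-1}+f_{m-2}$. For $n\in\mathbb{N}$ let $A^{(n)}=\{1,2,\dots,n\}$. The Fibonacci-sum set-graph $G^F_{A^{(n)}}$ is the multigraph (loops and multiple edges allowed) whose vertices are in bijection with the nonempty subsets of $A^{(n)}$ (so it has $2^n-1$ vertices); between the vertices corresponding to distinct subsets $S,T$ there is one edge for each pair $(i',j')$ with $i'\in S$, $j'\in T$, $i'\neq j'$ and $i'+j'\in\mathcal{F}$, and at the vertex corresponding to $S$ there is one loop for each pair of distinct elements $i',j'\in S$ with $i'+j'\in\mathcal{F}$. The degree of a vertex $v$ is $2l(v)+\sum_{u\neq v}\epsilon(v,u)$, where $l(v)$ is the number of loops at $v$ and $\epsilon(v,u)$ the number of edges between $v$ and $u$. *)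

(* Defs.v *)
From mathcomp Require Import all_boot zify.
Set Implicit Arguments. Unset Strict Implicit. Unset Printing Implicit Defensive.

Fixpoint fib (m : nat) : nat :=
  match m with
  | 0 => 0
  | 1 => 1
  | (k.+1 as p).+1 => fib p + fib k
  end.

(* Boolean membership in the Fibonacci set F; since fib k >= k - 1, any
   index k with fib k = m satisfies k < m + 2 (see is_fibP). *)
Definition is_fib (m : nat) : bool := [exists k : 'I_(m.+2), fib k == m].

Lemma fib_ge (m : nat) : m <= (fib m).+1.
Proof.
suff H : forall k, k <= (fib k).+1 /\ k.+1 <= (fib k.+1).+1 by case: (H m).
elim=> [|k [IH1 IH2]] //; split=> //.
case: k IH1 IH2 => [|[|k]] IH1 IH2 //.
rewrite [fib _]/=; rewrite [fib k.+3]/= in IH2 *.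
move: IH1 IH2; rewrite [fib k.+2]/=; lia.
Qed.

Lemma is_fibP (m : nat) : reflect (exists k, fib k = m) (is_fib m).
Proof.
apply: (iffP existsP) => [[k /eqP Hk]|[k Hk]]; first by exists k.
have Hlt : k < m.+2 by rewrite -Hk ltnS fib_ge.
by exists (Ordinal Hlt); rewrite /= Hk.
Qed.

(* Ground set A^(n) = {1,...,n} is represented by 'I_n, the element i : 'I_n
   standing for the integer i + 1. Vertices of G^F_{A^(n)} are the nonempty
   S : {set 'I_n}. *)
Definition elt {n} (i : 'I_n) : nat := (nat_of_ord i).+1.

Definition loops {n} (S : {set 'I_n}) : nat :=
  #|[set p : 'I_n * 'I_n |
      [&& p.1 \in S, p.2 \in S, (p.1 < p.2)%N & is_fib (elt p.1 + elt p.2)]]|.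

Definition edges {n} (S T : {set 'I_n}) : nat :=
  #|[set p : 'I_n * 'I_n |
      [&& p.1 \in S, p.2 \in T, p.1 != p.2 & is_fib (elt p.1 + elt p.2)]]|.

Definition degree {n} (S : {set 'I_n}) : nat :=
  2 * loops S + \sum_(T : {set 'I_n} | (T != set0) && (T != S)) edges S T.

(* Main.v *)
Require Import Defs.
From mathcomp Require Import all_boot zify.

Lemma edges_pos n (S T : {set 'I_n}) i j :
  i \in S -> j \in T -> i != j -> is_fib (elt i + elt j) -> 0 < edges S T.
Proof.
move=> hi hj hij hf; rewrite /edges card_gt0; apply/set0Pn; exists (i, j).
by rewrite inE /= hi hj hij hf.
Qed.

Theorem theorem2p1 (n : nat) (S : {set 'I_n}) :
  S != set0 -> degree S != 1.
Proof.
move=> hS; apply/negP => /eqP hd.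
move: hd; rewrite /degree.
set s := \sum_(T : {set 'I_n} | _) _ => hd.
have hl : loops S = 0 by lia.
have hs : s = 1 by lia.
case: (pickP (fun T : {set 'I_n} => [&& T != set0, T != S & 0 < edges S T])) => [T /and3P [hT0 hTS he]|hno]; last first.
  have : s = 0.
    rewrite /s big1 // => T /andP [h1 h2].
    by move: (hno T); rewrite h1 h2 /=; case: (edges S T).
  by rewrite hs.
move: he; rewrite /edges card_gt0 => /set0Pn [[i j]]; rewrite inE /= => /and4P [hi hj hij hf].
case hjS: (j \in S).
  have : 0 < loops S.
    rewrite /loops card_gt0; apply/set0Pn.
    case: (ltngtP i j) => [lt|gt|eq].
    - by exists (i, j); rewrite inE /= hi hjS lt hf.
    - by exists (j, i); rewrite inE /= hi hjS gt addnC hf.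
    - by move: hij; rewrite (val_inj eq) eqxx.
  by rewrite hl.
have hjs1 : j \in [set j] by rewrite inE.
have hjs2 : j \in j |: S by rewrite !inE eqxx.
have hne : [set j] != j |: S.
  case/set0Pn: hS => x hx.
  apply/negP => /eqP e.
  have : x \in [set j] by rewrite e !inE hx orbT.
  by rewrite inE => /eqP ex; move: hjS; rewrite -ex hx.
have hA : ([set j] != set0) && ([set j] != S).
  apply/andP; split; apply/negP => /eqP e.
  - by move: hjs1; rewrite e inE.
  - by move: hjs1; rewrite e hjS.
have hB : ((j |: S) != set0) && ((j |: S) != S).
  apply/andP; split; apply/negP => /eqP e.
  - by move: hjs2; rewrite e inE.
  - by move: hjs2; rewrite e hjS.
have e1 : 0 < edges S [set j] by exact: (@edges_pos n S [set j] i j hi hjs1 hij hf).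
have e2 : 0 < edges S (j |: S) by exact: (@edges_pos n S (j |: S) i j hi hjs2 hij hf).
have : 2 <= s.
  have hB' : ((j |: S) != set0) && ((j |: S) != S) && ((j |: S) != [set j]).
    by rewrite hB eq_sym hne.
  rewrite /s (bigD1 [set j] hA) (bigD1 (j |: S) hB') /= addnA.
  apply: leq_trans (leq_addr _ _).
  by rewrite -[2]/(1 + 1) leq_add.
by rewrite hs.
Qed.
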